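(* Let $\mathbb I$ be an index coding problem and let $V_1,\dots,V_n\in\mathbb F^3$ be a valid scalar linear index code of length $3$ for $\mathbb I$ over a finite field $\mathbb F$. Then for every type-2 alignment set of $\mathbb I$, with message set ${\cal W}'$ (the union of its triangular interfering sets), the vectors assigned to the messages of ${\cal W}'$ span a vector space of dimension exactly $2$.
   Context: Index coding setup: An index coding problem $\mathbb I$ over a finite field $\mathbb F$ consists of a set of messages ${\cal W}=\{W_1,\dots,W_n\}$ (each message is a symbol of $\mathbb F$ in the scalar setting), a set of receivers $[1:T]$, and for each receiver $j$ a demand set $D(j)\subseteq{\cal W}$ and a side-information set $S(j)\subseteq {\cal W}\setminus D(j)$. Every message is demanded by at least one receiver. For a receiver $j$ and $W_k\in D(j)$, the interfering set is $Interf_k(j)={\cal W}\setminus(\{W_k\}\cup S(j))$; if $W_k\notin D(j)$ then $Interf_k(j)=\emptyset$. A scalar linear index code of length $L$ over $\mathbb F$ is an assignment of vectors $V_1,\dots,V_n\in\mathbb F^L$ to the messages; the source broadcasts $\sum_{i=1}^n V_iW_i\in\mathbb F^L$, and the code is valid if every receiver $j$ can recover every message of $D(j)$ from the broadcast codeword and the messages in $S(j)$. Two distinct messages $W_i,W_k$ are in conflict if there is a receiver $j$ with $W_k\in D(j)$ and $W_i\in Interf_k(j)$, or a receiver $j$ with $W_i\in D(j)$ and $W_k\in Interf_i(j)$. A triangular interfering set is a subset ${\cal W}''\subseteq{\cal W}$ with $|{\cal W}''|=3$ such that there exist a receiver $j$ and a message $W_k\in D(j)\setminus{\cal W}''$ with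 ${\cal W}''\subseteq Interf_k(j)$, and at least two messages of ${\cal W}''$ are in conflict. Two distinct triangular interfering sets ${\cal W}_1,{\cal W}_2$ are adjacent if ${\cal W}_1\cap{\cal W}_2=\{W_a,W_b\}$ with $W_a,W_b$ in conflict. Two triangular interfering sets are connected if there is a finite sequence of triangular interfering sets starting at one and ending at the other in which consecutive sets are adjacent (every set is connected to itself). A type-2 alignment set is a maximal collection of pairwise connected triangular interfering sets (an equivalence class under connectedness); its message set is the union of its triangular interfering sets. *)

(* Defs.v *)
From HB Require Import structures.
From mathcomp Require Import all_boot all_order all_algebra all_field.
Set Implicit Arguments. Unset Strict Implicit. Unset Printing Implicit Defensive.
Import GRing.Theory.
Local Open Scope ring_scope.

(* An index coding problem with messages 'I_n and receivers 'I_T is given by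
   demand sets D : 'I_T -> {set 'I_n} and side-information sets
   S : 'I_T -> {set 'I_n}. *)

Definition ic_wf (n T : nat) (D S : 'I_T -> {set 'I_n}) : Prop :=
  (forall j, [disjoint S j & D j]) /\ (forall k : 'I_n, exists j, k \in D j).

Definition interf (n T : nat) (D S : 'I_T -> {set 'I_n}) (k : 'I_n) (j : 'I_T)
  : {set 'I_n} :=
  if k \in D j then ~: (k |: S j) else set0.

Definition conflict (n T : nat) (D S : 'I_T -> {set 'I_n}) (a b : 'I_n) : bool :=
  (a != b) &&
  [exists j, ((b \in D j) && (a \in interf D S b j))
          || ((a \in D j) && (b \in interf D S a j))].

Definition triangular (n T : nat) (D S : 'I_T -> {set 'I_n}) (W : {set 'I_n}) : bool :=
  (#|W| == 3)%N &&
  [exists j, exists k, [&& k \in D j, k \notin W & W \subset interf D S k j]] &&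
  [exists a, exists b, [&& a \in W, b \in W & conflict D S a b]].

Definition adjacent (n T : nat) (D S : 'I_T -> {set 'I_n}) (W1 W2 : {set 'I_n}) : bool :=
  [&& triangular D S W1, triangular D S W2, W1 != W2 &
    [exists a, exists b, (W1 :&: W2 == [set a; b]) && conflict D S a b]].

Definition connected (n T : nat) (D S : 'I_T -> {set 'I_n}) (W1 W2 : {set 'I_n}) : bool :=
  connect (adjacent D S) W1 W2.

Definition type2_alignment_set (n T : nat) (D S : 'I_T -> {set 'I_n})
  (A : {set {set 'I_n}}) : Prop :=
  exists2 W0, triangular D S W0 &
    A = [set W | triangular D S W && connected D S W0 W].

Definition alignment_messages (n : nat) (A : {set {set 'I_n}}) : {set 'I_n} :=
  \bigcup_(W in A) W.

Definition codeword (F : fieldType) (L n : nat) (V : 'I_n -> 'rV[F]_L)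
  (w : 'I_n -> F) : 'rV[F]_L := \sum_i w i *: V i.

(* valid scalar linear index code: each receiver j recovers each demanded
   W_k from the codeword and its side information, i.e. the demanded
   message is a function of (codeword, side information). *)
Definition valid_code (F : fieldType) (L n T : nat) (D S : 'I_T -> {set 'I_n})
  (V : 'I_n -> 'rV[F]_L) : Prop :=
  forall (j : 'I_T) (k : 'I_n), k \in D j ->
    forall w w' : 'I_n -> F,
      (forall i, i \in S j -> w i = w' i) ->
      codeword V w = codeword V w' -> w k = w' k.

(* Main.v *)
Require Import Defs.
From HB Require Import structures.
From mathcomp Require Import all_boot all_order all_algebra all_field.
Set Implicit Arguments. Unset Strict Implicit. Unset Printing Implicit Defensive.
Import GRing.Theory.
Local Open Scope ring_scope.

Section Thm.
Variables (F : finFieldType) (n T : nat) (D S : 'I_T -> {set 'I_n})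
  (V : 'I_n -> 'rV[F]_3).
Hypotheses (wf : ic_wf D S) (vc : valid_code D S V).

Local Notation SW X := (\sum_(i in X) <<V i>>)%MS.

Lemma notin_span j k (X : {set 'I_n}) : k \in D j ->
  X \subset interf D S k j -> ~~ (V k <= SW X)%MS.
Proof.
move=> Dk sX; apply/negP => /sub_sumsmxP [u Hu].
have Hc : forall i, exists c : F, u i *m <<V i>>%MS = c *: V i.
  move=> i; apply/sub_rVP; have := submxMl (u i) <<V i>>%MS; by rewrite genmxE.
have [c Hc'] := fin_all_exists Hc.
have kS : k \notin S j.
  by apply/negP => kS; have := (proj1 wf j); move/pred0P/(_ k); rewrite /= kS Dk.
have kX : k \notin X.
  apply/negP => /(subsetP sX); by rewrite /interf Dk !inE eqxx.
pose w := fun i : 'I_n => (i == k)%:R - (if i \in X then c i else 0).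
have wk : w k = 1 by rewrite /w eqxx (negbTE kX) subr0.
suff : w k = 0 by rewrite wk => /eqP; rewrite oner_eq0.
apply: (vc Dk (w' := fun _ => 0)).
  move=> i iS; rewrite /w.
  have ik : (i == k) = false by apply/negbTE/eqP => ik; move: iS; rewrite ik (negbTE kS).
  have iX : (i \in X) = false.
    apply/negbTE/negP => /(subsetP sX); by rewrite /interf Dk !inE iS orbT.
  by rewrite ik iX subr0.
rewrite /codeword [X in _ = X]big1; last by move=> i _; rewrite scale0r.
rewrite (eq_bigr (fun i => (i == k)%:R *: V i - (if i \in X then c i *: V i else 0))); last first.
  by move=> i _; rewrite /w scalerBl; case: ifP; rewrite ?scale0r.
rewrite sumrB -big_mkcond /= (bigD1 k) //= eqxx scale1r big1; last first.
  move=> i /negbTE ->; by rewrite scale0r.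
rewrite addr0 {1}Hu (eq_bigr (fun i => c i *: V i)) ?subrr //.
Qed.

Lemma V_nz a : V a != 0.
Proof.
have [j Dj] := proj2 wf a.
have := notin_span (X := set0) Dj (sub0set _).
by rewrite big_set0 submx0.
Qed.

Lemma rank_pair a b : ~~ (V b <= <<V a>>)%MS -> \rank (<<V a>> + <<V b>>)%MS = 2.
Proof.
move=> nb; apply/eqP; rewrite eqn_leq; apply/andP; split.
  apply: leq_trans (mxrank_adds_leqif _ _) _.
  by rewrite !genmxE -[2]/(1 + 1)%N leq_add // rank_leq_row.
rewrite ltnNge; apply/negP => le1.
have sa : (<<V a>> <= <<V a>> + <<V b>>)%MS by rewrite addsmxSl.
have ra : \rank (<<V a>>)%MS = 1.
  by rewrite genmxE; apply/eqP; rewrite eqn_leq rank_leq_row lt0n mxrank_eq0 V_nz.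
have H : (<<V a>> + <<V b>> <= <<V a>>)%MS.
  by rewrite -(mxrank_leqif_sup sa).2 ra eqn_leq le1 andbT -ra mxrankS.
have vb : (V b <= <<V b>>)%MS by rewrite genmxE.
by rewrite (submx_trans vb (submx_trans (addsmxSr (<<V a>>)%MS _) H)) in nb.
Qed.

Lemma rank_conflict a b : conflict D S a b -> \rank (<<V a>> + <<V b>>)%MS = 2.
Proof.
case/andP => _ /existsP [j /orP [/andP [Db ai] | /andP [Da bi]]].
  apply: rank_pair; have := notin_span (X := [set a]) Db.
  by rewrite big_set1 sub1set; apply.
rewrite addsmxC; apply: rank_pair.
have := notin_span (X := [set b]) Da.
by rewrite big_set1 sub1set; apply.
Qed.

Lemma tri_le2 W : triangular D S W -> (\rank (SW W) <= 2)%N.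
Proof.
case/andP => /andP [_ /existsP [j /existsP [k /and3P [Dk _ sW]]]] _.
have := notin_span Dk sW.
rewrite leqNgt; apply: contra => H3.
apply: submx_full; by rewrite /row_full eqn_leq rank_leq_col H3.
Qed.

Lemma tri_eq W a b : triangular D S W -> a \in W -> b \in W -> conflict D S a b ->
  (SW W <= <<V a>> + <<V b>>)%MS && (<<V a>> + <<V b>> <= SW W)%MS.
Proof.
move=> tW aW bW cab.
have s : (<<V a>> + <<V b>> <= SW W)%MS.
  by rewrite addsmx_sub (sumsmx_sup a) ?(sumsmx_sup b).
rewrite s andbT -(mxrank_leqif_sup s).2 rank_conflict // eqn_leq tri_le2 //=.
by rewrite -(rank_conflict cab) mxrankS.
Qed.

Lemma adj_le W1 W2 : adjacent D S W1 W2 -> (SW W2 <= SW W1)%MS && (SW W1 <= SW W2)%MS.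
Proof.
case/and4P => t1 t2 _ /existsP [a /existsP [b /andP [/eqP E cab]]].
have : a \in W1 :&: W2 by rewrite E !inE eqxx.
have : b \in W1 :&: W2 by rewrite E !inE eqxx orbT.
rewrite !inE => /andP [b1 b2] /andP [a1 a2].
case/andP: (tri_eq t1 a1 b1 cab) => h1 h2.
case/andP: (tri_eq t2 a2 b2 cab) => h3 h4.
by rewrite (submx_trans h3 h2) (submx_trans h1 h4).
Qed.

Lemma conn_le W0 W : connected D S W0 W -> (SW W <= SW W0)%MS.
Proof.
case/connectP => p + ->; elim: p W0 => [|y p IH] x /=; first by [].
case/andP => /adj_le /andP [h _] /IH h2; exact: submx_trans h2 h.
Qed.


End Thm.

Theorem theorem4 (F : finFieldType) (n T : nat) (D S : 'I_T -> {set 'I_n})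
  (V : 'I_n -> 'rV[F]_3) :
  ic_wf D S -> valid_code D S V ->
  forall A : {set {set 'I_n}}, type2_alignment_set D S A ->
  \rank (\sum_(i in alignment_messages A) <<V i>>)%MS = 2%N.
Proof.
move=> wf vc A [W0 t0 ->].
set U := alignment_messages _.
have sU : ((\sum_(i in U) <<V i>>) <= \sum_(i in W0) <<V i>>)%MS.
  apply/sumsmx_subP => i; rewrite /U /alignment_messages => /bigcupP [W].
  rewrite inE => /andP [tW cW] iW.
  apply: submx_trans _ (conn_le wf vc cW); exact: (sumsmx_sup i) iW (submx_refl _).
have Us : ((\sum_(i in W0) <<V i>>) <= \sum_(i in U) <<V i>>)%MS.
  apply/sumsmx_subP => i iW; apply: (sumsmx_sup i) => //.
  apply/bigcupP; exists W0 => //; rewrite inE t0; exact: connect0.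
have := t0; case/andP => _ /existsP [a /existsP [b /and3P [aW bW cab]]].
case/andP: (tri_eq wf vc t0 aW bW cab) => h1 h2.
have r0 : \rank (\sum_(i in W0) <<V i>>)%MS = 2%N.
  apply/eqP; rewrite eqn_leq (tri_le2 wf vc t0) /=. 
  by apply: leq_trans _ (mxrankS h2); rewrite (rank_conflict wf vc cab).
have e1 := mxrankS sU; have e2 := mxrankS Us; rewrite r0 in e1 e2.
by apply/eqP; rewrite eqn_leq e1 e2.
Qed.
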